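(* In the setting described in the context, the function $\mathcal{W}$ is continuous on $\mathcal{K}(\mathbb{R}^n)$ with respect to the Hausdorff distance.
   Context: Let $\|\cdot\|$ be a norm on $\mathbb{R}^n$ and $\mathrm{dist}(x,\Omega):=\inf_{y\in\Omega}\|x-y\|$. Let $\mathcal{K}(\mathbb{R}^n)$ denote the nonempty compact subsets of $\mathbb{R}^n$, with Hausdorff distance $d_H(X,Y):=\max\{\sup_{x\in X}\mathrm{dist}(x,Y),\sup_{y\in Y}\mathrm{dist}(y,X)\}$. Consider $x_{k+1}=f(x_k,u_k)$ with $f:\mathbb{R}^n\times\mathbb{R}^m\to\mathbb{R}^n$ continuous and inputs $u_k\in U$, $U\subset\mathbb{R}^m$ nonempty compact. For $x\in\mathbb{R}^n$ and $\pi:\mathbb{Z}_+\to U$, $\varphi_x^\pi(0)=x$, $\varphi_x^\pi(k+1)=f(\varphi_x^\pi(k),\pi(k))$; $\mathcal{R}(X,k):=\{\varphi_x^\pi(k):x\in X,\pi\in U^{\mathbb{Z}_+}\}$. Let $\mathcal{A}\in\mathcal{K}(\mathbb{R}^n)$ be controlled invariant. Assume local $\ell_p$-stabilizability: there exist $r>0$, $M\ge1$, $p>0$, $\lambda:[0,r]\times\mathbb{Z}_+\to\mathbb{R}_+$ such that (1) for each $k$, $s\mapsto\lambda(s,k)$ is continuous, nondecreasing, $\lambda(0,k)=0$; for each $s$, $k\mapsto\lambda(s,k)$ is nonincreasing, $\lambda(s,0)\le s$; (2) $\sum_{k}\lambda(r,k)^p<\infty$; (3) for every $x$ with $\mathrm{dist}(x,\mathcal{A})\le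 r$ there is $\pi\in U^{\mathbb{Z}_+}$ with $\mathrm{dist}(\varphi_x^\pi(k),\mathcal{A})\le M\lambda(\mathrm{dist}(x,\mathcal{A}),k)$ for all $k$. Let $\alpha:\mathbb{R}^n\to\mathbb{R}_+$ be continuous with $\underline{\alpha}\,\mathrm{dist}(x,\mathcal{A})^{\bar p}\le\alpha(x)\le\overline{\alpha}\,\mathrm{dist}(x,\mathcal{A})^{\bar p}$, constants $\underline{\alpha},\overline{\alpha}>0$, $\bar p\ge p$. Define $\Psi(X):=\inf_{y\in X}\alpha(y)$, $\mathcal{V}(X):=\sum_{k=0}^\infty\Psi(\mathcal{R}(X,k))\in[0,\infty]$, and $\mathcal{W}(X):=1-\exp(-\mathcal{V}(X))$ with the convention $\exp(-\infty)=0$. *)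

(* Defs.v *)
From HB Require Import structures.
From mathcomp Require Import all_boot all_order all_algebra.
From mathcomp Require Import all_classical all_reals all_analysis.
Set Implicit Arguments. Unset Strict Implicit. Unset Printing Implicit Defensive.
Import Order.TTheory GRing.Theory Num.Theory.
Import numFieldNormedType.Exports.
Local Open Scope classical_set_scope.
Local Open Scope ring_scope.

Section Defs.
Variables (R : realType) (n m : nat).

Definition is_norm (N : 'rV[R]_n -> R) : Prop :=
  [/\ (forall x, N x = 0 -> x = 0),
      (forall (a : R) x, N (a *: x) = `|a| * N x) &
      (forall x y, N (x + y) <= N x + N y)].

Definition dist (N : 'rV[R]_n -> R) (x : 'rV[R]_n) (Om : set 'rV[R]_n) : R :=
  inf [set N (x - y) | y in Om].

Definition dH (N : 'rV[R]_n -> R) (X Y : set 'rV[R]_n) : R :=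
  Num.max (sup [set dist N x Y | x in X]) (sup [set dist N y X | y in Y]).

Definition is_K (X : set 'rV[R]_n) : Prop := compact X /\ X !=set0.

Fixpoint traj (f : 'rV[R]_n * 'rV[R]_m -> 'rV[R]_n) (x : 'rV[R]_n)
  (pi : nat -> 'rV[R]_m) (k : nat) : 'rV[R]_n :=
  match k with
  | 0 => x
  | k'.+1 => f (traj f x pi k', pi k')
  end.

Definition admissible (U : set 'rV[R]_m) (pi : nat -> 'rV[R]_m) : Prop :=
  forall k, U (pi k).

Definition Reach (f : 'rV[R]_n * 'rV[R]_m -> 'rV[R]_n) (U : set 'rV[R]_m)
  (X : set 'rV[R]_n) (k : nat) : set 'rV[R]_n :=
  [set z | exists x pi, [/\ X x, admissible U pi & z = traj f x pi k]].

Definition controlled_invariant (f : 'rV[R]_n * 'rV[R]_m -> 'rV[R]_n)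
  (U : set 'rV[R]_m) (A : set 'rV[R]_n) : Prop :=
  forall x, A x -> exists u, U u /\ A (f (x, u)).

Definition Psi (alpha : 'rV[R]_n -> R) (X : set 'rV[R]_n) : R :=
  inf [set alpha y | y in X].

Definition Vfun f U (alpha : 'rV[R]_n -> R) (X : set 'rV[R]_n) : \bar R :=
  (\sum_(0 <= k <oo) (Psi alpha (Reach f U X k))%:E)%E.

(* W = 1 - exp(-V), with exp(-oo) = 0 *)
Definition Wfun f U (alpha : 'rV[R]_n -> R) (X : set 'rV[R]_n) : R :=
  match Vfun f U alpha X with
  | EFin v => 1 - expR (- v)
  | _ => 1
  end.

Definition local_lp_stabilizable f U (N : 'rV[R]_n -> R) (A : set 'rV[R]_n)
  (r M p : R) (lambda : R -> nat -> R) : Prop :=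
  0 < r /\ 1 <= M /\ 0 < p /\
      (forall s k, 0 <= s <= r -> 0 <= lambda s k) /\
      (forall k, {within `[0, r], continuous (fun s => lambda s k)}) /\
      (forall k s1 s2, 0 <= s1 -> s1 <= s2 -> s2 <= r ->
           lambda s1 k <= lambda s2 k) /\
      (forall k, lambda 0 k = 0) /\
      (forall s k1 k2, 0 <= s <= r -> (k1 <= k2)%N ->
           lambda s k2 <= lambda s k1) /\
      (forall s, 0 <= s <= r -> lambda s 0 <= s) /\
      (\sum_(0 <= k <oo) ((lambda r k) `^ p)%:E < +oo)%E /\
      (forall x, dist N x A <= r ->
         exists pi, admissible U pi /\
           forall k, dist N (traj f x pi k) A <= M * lambda (dist N x A) k).

End Defs.

(* Main.v *)
Require Import Defs.
From HB Require Import structures.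
From mathcomp Require Import all_boot all_order all_algebra.
From mathcomp Require Import all_classical all_reals all_analysis.
From mathcomp Require Import ring lra.
Import Order.TTheory GRing.Theory Num.Theory.
Import numFieldNormedType.Exports.
Local Open Scope classical_set_scope.
Local Open Scope ring_scope.
Section NormFacts.
Variables (R : realType) (n : nat) (N : 'rV[R]_n -> R).
Hypothesis hN : is_norm N.

Lemma N0 : N 0 = 0.
Proof. case: hN => _ hZ _. by rewrite -(scale0r (0 : 'rV[R]_n)) hZ normr0 mul0r. Qed.

Lemma NN x : N (- x) = N x.
Proof. case: hN => _ hZ _. by rewrite -scaleN1r hZ normrN normr1 mul1r. Qed.

Lemma NB x y : N (x - y) = N (y - x).
Proof. by rewrite -NN opprB. Qed.

Lemma Nge0 x : 0 <= N x.
Proof.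
case: hN => _ _ hT.
have := hT x (- x); rewrite subrr N0 NN.
move=> h; have : 0 <= N x + N x by []. lra.
Qed.

Lemma Ntri x y : N (x + y) <= N x + N y.
Proof. by case: hN. Qed.

Lemma Nle : exists2 C, 0 < C & forall x, N x <= C * `|x|.
Proof.
case: hN => _ hZ hT.
exists (1 + \sum_(j < n) N ('e_j)).
  have h : 0 <= \sum_(j < n) N 'e_j by apply: sumr_ge0 => j _; exact: Nge0.
  lra.
move=> x; rewrite {1}(row_sum_delta x).
apply: (@le_trans _ _ (\sum_(j < n) `|x| * N 'e_j)).
  apply: (big_ind2 (fun a b => N a <= b)).
  - by rewrite N0.
  - move=> a1 b1 a2 b2 h1 h2; apply: le_trans (Ntri _ _) _; exact: lerD.
  move=> j _; rewrite hZ; apply: ler_wpM2r; first exact: Nge0.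
  rewrite [leRHS]/Num.Def.normr /= mx_normrE; apply/bigmax_geP; right => /=; exists (ord0, j) => //.
rewrite -mulr_sumr mulrC ler_wpM2r // ?lerDr //.
Qed.


Lemma near_norm (V : normedModType R) (x : V) e : 0 < e -> \forall y \near x, `|x - y| < e.
Proof. by move=> e0; apply/nbhs_ballP; exists e => // y /=; rewrite -ball_normE. Qed.

Lemma Nge : exists2 c, 0 < c & forall x, c * `|x| <= N x.
Proof.
have [C C0 hC] := Nle.
pose S := [set x : 'rV[R]_n | `|x| = 1].
have cS : compact S.
  apply: bounded_closed_compact.
    rewrite /bounded_set /bounded_near; near=> M => x /= ->.
    near: M; exact: nbhs_pinfty_ge.
  have -> : S = Num.norm @^-1` [set 1] by [].
  apply: ((continuous_closedP _).1 (@norm_continuous R _)); exact: closed_eq.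
have /compact_near_coveringP cov := cS.
have H : forall x0, S x0 -> \forall x' \near x0 & c \near 0^'+, c <= N x'.
  move=> x0 S0.
  have Nx0 : 0 < N x0.
    rewrite lt_neqAle Nge0 andbT; apply/eqP => /esym h.
    case: hN => h0 _ _; move: S0; rewrite /S /= (h0 _ h) normr0 => /eqP.
    by rewrite eq_sym oner_eq0.
  exists ([set x | `|x0 - x| < N x0 / (2 * C)], [set c | c < N x0 / 2]) => /=.
    split; first by apply: (@near_norm _ x0); rewrite divr_gt0 // mulr_gt0.
    have h2 : (0:R) < N x0 / 2 by rewrite divr_gt0.
    exact: (nbhs_right_lt h2).
  case=> x c /= [hx hc].
  have : N x0 <= N x + N (x0 - x) by have := Ntri x (x0 - x); rewrite addrCA subrr addr0.
  have := hC (x0 - x).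
  have : C * `|x0 - x| <= C * (N x0 / (2 * C)) by apply: ler_wpM2l; [exact: ltW | exact: ltW].
  have -> : C * (N x0 / (2 * C)) = N x0 / 2 by field; rewrite gt_eqF.
  lra.
have hS : \forall c \near (0:R)^'+, S `<=` (fun x => c <= N x).
  by apply: cov => //; exact: H.

have [c [hc c0]] := @filter_ex _ (0:R)^'+ _ _ (filterI hS (nbhs_right_gt 0)).
exists c => // x.
have [->|x0] := eqVneq x 0; first by rewrite normr0 mulr0 Nge0.
have nx : 0 < `|x| by rewrite normr_gt0.
have := hc (`|x|^-1 *: x).
rewrite /S /= normrZ normrV ?unitfE ?gt_eqF // normr_id mulVf ?gt_eqF // => /(_ erefl).
case: hN => _ hZ _; rewrite hZ normrV ?unitfE ?gt_eqF // normr_id.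
by rewrite ler_pdivlMl // mulrC.
Unshelve. all: by end_near.
Qed.

End NormFacts.
Arguments N0 {R n N}. Arguments NN {R n N}. Arguments NB {R n N}. Arguments Nge0 {R n N}.
Arguments Ntri {R n N}. Arguments Nle {R n N}. Arguments Nge {R n N}.


Section Traj.
Variables (R : realType) (n m : nat) (f : 'rV[R]_n * 'rV[R]_m -> 'rV[R]_n)
  (U : set 'rV[R]_m).

Lemma traj_ext x pi pi' k : (forall j, (j < k)%N -> pi j = pi' j) ->
  traj f x pi k = traj f x pi' k.
Proof.
elim: k => [//|k IH] h /=.
by rewrite IH ?h // => j jk; apply: h; exact: ltnW.
Qed.

Definition catpi (k0 : nat) (pi pi' : nat -> 'rV[R]_m) :=
  fun i => if (i < k0)%N then pi i else pi' (i - k0)%N.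

Lemma traj_cat x pi pi' k0 j :
  traj f x (catpi k0 pi pi') (k0 + j) = traj f (traj f x pi k0) pi' j.
Proof.
elim: j => [|j IH].
  rewrite addn0; apply: traj_ext => i ik; by rewrite /catpi ik.
rewrite addnS /= IH /catpi ltnNge leq_addr /=.
by rewrite addKn.
Qed.

Lemma adm_cat k0 pi pi' : admissible U pi -> admissible U pi' ->
  admissible U (catpi k0 pi pi').
Proof. by move=> h h' i; rewrite /catpi; case: ifP. Qed.

Lemma Reach_mem X x pi k : X x -> admissible U pi -> Reach f U X k (traj f x pi k).
Proof. by move=> Xx hpi; exists x, pi. Qed.

Lemma ReachS_in X k w u : Reach f U X k w -> U u -> Reach f U X k.+1 (f (w, u)).
Proof.
case=> x [pi [Xx hpi ->]] Uu.
exists x, (catpi k pi (fun=> u)); split.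
- exact: Xx.
- by apply: adm_cat.
- by have := traj_cat x pi (fun=> u) k 1; rewrite addn1 => ->.
Qed.

Lemma ReachS X k : Reach f U X k.+1 = [set f z | z in Reach f U X k `*` U].
Proof.
apply/seteqP; split.
  move=> z [x [pi [Xx hpi ->]]]; exists (traj f x pi k, pi k) => //.
  by split; [exists x, pi | exact: hpi].
by move=> z [[w u] [/= Rw Uu] <-]; apply: ReachS_in.
Qed.

Lemma Reach0_sub X z : Reach f U X 0 z -> X z.
Proof. by case=> x [pi [Xx _ ->]]. Qed.

Hypothesis U0 : U !=set0.

Lemma adm_ex : exists pi, admissible U pi.
Proof. by case: U0 => u Uu; exists (fun=> u). Qed.

Lemma Reach0_in X x : X x -> Reach f U X 0 x.
Proof. by case: adm_ex => pi hpi Xx; exists x, pi. Qed.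

Lemma Reach_nonempty X k : X !=set0 -> Reach f U X k !=set0.
Proof. by case: adm_ex => pi hpi [x Xx]; exists (traj f x pi k); exists x, pi. Qed.

Hypothesis fc : continuous f.
Hypothesis cU : compact U.

Lemma Reach_compact X k : compact X -> compact (Reach f U X k).
Proof.
move=> cX; elim: k => [|k IH].
  have -> : Reach f U X 0 = X.
    apply/seteqP; split; [exact: Reach0_sub | exact: Reach0_in].
  exact: cX.
rewrite ReachS; apply: continuous_compact.
  exact: continuous_subspaceT.
exact: compact_setX.
Qed.

Lemma traj_cont pi k : continuous (fun y => traj f y pi k).
Proof.
elim: k => [|k IH] y /=; first exact: cvg_id.
apply: (@continuous_comp _ _ _ (fun y => (traj f y pi k, pi k)) f); last exact: fc.
exact: (cvg_pair (IH y) (cvg_cst (pi k))).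
Qed.

End Traj.
Arguments traj_ext {R n m f}. Arguments traj_cat {R n m f}. Arguments adm_cat {R m U}.
Arguments Reach_mem {R n m f U X x pi k}. Arguments ReachS_in {R n m f U X k w u}. Arguments ReachS {R n m f U}.
Arguments Reach0_sub {R n m f U X z}. Arguments adm_ex {R m U}. Arguments Reach0_in {R n m f U} U0 {X x}.
Arguments Reach_nonempty {R n m f U}. Arguments Reach_compact {R n m f U}. Arguments traj_cont {R n m f}.


Section InfHelp.
Variable R : realType.
Lemma inf_ge0' (E : set R) : (forall x, E x -> 0 <= x) -> 0 <= inf E.
Proof.
move=> h; have [E0|E0] := pselect (E !=set0).
  by apply: lb_le_inf => // y /h.
have -> : E = set0 by apply/seteqP; split => // x Ex; apply: E0; exists x.
by rewrite inf0.
Qed.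

Lemma inf_le' (E : set R) x : (forall y, E y -> 0 <= y) -> E x -> inf E <= x.
Proof. by move=> h Ex; apply: ge_inf => //; exists 0 => y /h. Qed.
End InfHelp.

Section NormNear.
Variables (R : realType) (n : nat) (N : 'rV[R]_n -> R).
Hypothesis hN : is_norm N.

Lemma EB (x : 'rV[R]_n) d : 0 < d -> \forall y \near x, N (y - x) < d.
Proof.
move=> d0; have [C C0 hC] := Nle hN.
have : \forall y \near x, `|x - y| < d / C by apply: near_norm; rewrite divr_gt0.
apply: filterS => y h.
apply: le_lt_trans (hC _) _; rewrite -opprB normrN.
by rewrite -ltr_pdivlMl // mulrC.
Qed.

Lemma HB (x : 'rV[R]_n) (P : set 'rV[R]_n) : nbhs x P ->
  exists2 d, 0 < d & forall y, N (y - x) < d -> P y.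
Proof.
move=> /nbhs_ballP [e e0 he]; have [c c0 hc] := Nge hN.
exists (c * e); first by rewrite mulr_gt0.
move=> y hy; apply: he; rewrite -ball_normE /ball_ /= -opprB normrN.
have := hc (y - x); rewrite -(ltr_pM2l c0) => h; lra.
Qed.
End NormNear.
Arguments EB {R n N} hN {x d}. Arguments HB {R n N} hN {x P}.


Section UCsec.
Variables (R : realType) (n m : nat) (N : 'rV[R]_n -> R) (U : set 'rV[R]_m).
Hypothesis hN : is_norm N.
Hypothesis cU : compact U.

Lemma Ntri3 (a b c : 'rV[R]_n) : N (a - c) <= N (a - b) + N (b - c).
Proof. by have := Ntri hN (a - b) (b - c); rewrite addrA subrK. Qed.

Lemma UC (V : pseudoMetricType R) (K : set 'rV[R]_n) (g : 'rV[R]_n * 'rV[R]_m -> V) :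
  compact K -> continuous g -> forall e, 0 < e ->
  exists2 d, 0 < d & forall z u z', K z -> U u -> N (z' - z) < d ->
    ball (g (z, u)) e (g (z', u)).
Proof.
move=> cK gc e e0.
have /compact_near_coveringP cov := compact_setX cK cU.
pose P := fun (d : R) (p : 'rV[R]_n * 'rV[R]_m) =>
  forall z', N (z' - p.1) < d -> ball (g p) e (g (z', p.2)).
have H : forall p, (K `*` U) p -> \forall p' \near p & d \near (0:R)^'+, P d p'.
  case=> z0 u0 [Kz0 Uu0].
  have : nbhs (z0, u0) (g @^-1` ball (g (z0, u0)) (e / 2)).
    by apply: gc; apply: nbhsx_ballx; rewrite divr_gt0.
  case=> [[A1 A2] /= [hA1 hA2] hA].
  have [rho rho0 hrho] := HB hN hA1.
  have h2 : (0:R) < rho / 2 by rewrite divr_gt0.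
  exists ([set p | N (p.1 - z0) < rho / 2 /\ A2 p.2], [set d | d < rho / 2]) => /=.
    split.
      exists ([set y | N (y - z0) < rho / 2], A2) => /=.
        split => //; exact: (EB hN h2).
      by case=> y u /= [].
    exact: (nbhs_right_lt h2).
  case=> [[z u] d] /= [[hz hu] hd] z' hz' /=.
  have hz'0 : N (z' - z0) < rho.
    have := Ntri3 z' z z0; lra.
  have B1 : ball (g (z0, u0)) (e / 2) (g (z, u)).
    apply: (hA (z, u)); split => //=; apply: hrho; lra.
  have B2 : ball (g (z0, u0)) (e / 2) (g (z', u)).
    apply: (hA (z', u)); split => //=; exact: hrho.
  exact: ball_splitr B1 B2.
have hS : \forall d \near (0:R)^'+, (K `*` U) `<=` P d.
  by apply: cov => //; exact: H.
have [d [hd d0]] := @filter_ex _ (0:R)^'+ _ _ (filterI hS (nbhs_right_gt 0)).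
exists d => // z u z' Kz Uu hz'.
exact: (hd (z, u) (conj Kz Uu) z' hz').
Qed.

End UCsec.
Arguments UC {R n m N U} hN cU {V K g}. Arguments Ntri3 {R n N} hN.


Section Main.
Variables (R : realType) (n m : nat) (N : 'rV[R]_n -> R)
  (f : 'rV[R]_n * 'rV[R]_m -> 'rV[R]_n) (U : set 'rV[R]_m) (alpha : 'rV[R]_n -> R).
Hypotheses (hN : is_norm N) (fc : continuous f) (cU : compact U) (U0 : U !=set0)
  (ac : continuous alpha) (a0 : forall x, 0 <= alpha x).

Let P Y k := Psi alpha (Reach f U Y k).

Lemma Psi_ge0 Y k : 0 <= P Y k.
Proof. by apply: inf_ge0' => _ [z _ <-]; exact: a0. Qed.

Lemma Psi_le Y k z : Reach f U Y k z -> P Y k <= alpha z.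
Proof. by move=> hz; apply: inf_le' => [_ [w _ <-]|]; [exact: a0 | exists z]. Qed.

Lemma traj_near x pi k e : 0 < e -> exists2 d, 0 < d & forall y, N (y - x) < d ->
  `|alpha (traj f y pi k) - alpha (traj f x pi k)| < e.
Proof.
move=> e0.
have : nbhs x ((fun y => alpha (traj f y pi k)) @^-1` ball (alpha (traj f x pi k)) e).
  apply: (continuous_comp (traj_cont fc pi k x) (ac _)); exact: nbhsx_ballx.
move=> /(HB hN) [d d0 hd]; exists d => // y /hd /=.
by rewrite -ball_normE /ball_ /= distrC.
Qed.

Lemma RU (X : set 'rV[R]_n) : compact X -> forall (k : nat) (e : R), 0 < e ->
  exists2 d, 0 < d & forall Y : set 'rV[R]_n,
  (forall y, Y y -> exists2 x, X x & N (y - x) < d) ->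
  forall z', Reach f U Y k z' -> exists2 z, Reach f U X k z & N (z' - z) < e.
Proof.
move=> cX; elim=> [|k IH] e e0.
  exists e => // Y hY z' /Reach0_sub /hY [x Xx hx].
  by exists x => //; exact: (Reach0_in U0).
have [C C0 hC] := Nle hN.
have eC : 0 < e / C by rewrite divr_gt0.
have [d1 d10 hd1] := UC hN cU (Reach_compact U0 fc cU X k cX) fc _ eC.
have [d d0 hd] := IH d1 d10.
exists d => // Y hY _ [y [pi [Yy hpi ->]]] /=.
have [w Rw hw] := hd Y hY (traj f y pi k) (Reach_mem Yy hpi).
have := hd1 w (pi k) (traj f y pi k) Rw (hpi k) hw.
rewrite -ball_normE /ball_ /= => hb.
exists (f (w, pi k)); first exact: ReachS_in.
apply: le_lt_trans (hC _) _; rewrite -opprB normrN.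
by rewrite -ltr_pdivlMl // mulrC.
Qed.

Lemma Pk_lower (X : set 'rV[R]_n) : compact X -> forall (k : nat) (e : R), 0 < e ->
  exists2 d, 0 < d & forall Y : set 'rV[R]_n, Y !=set0 ->
  (forall y, Y y -> exists2 x, X x & N (y - x) < d) -> P X k - e < P Y k.
Proof.
move=> cX k e e0.
have e2 : 0 < e / 2 by rewrite divr_gt0.
have gc : continuous (fun p : 'rV[R]_n * 'rV[R]_m => alpha p.1).
  move=> p; apply: (continuous_comp (f := fst) (g := alpha)); [exact: cvg_fst | exact: ac].
have [d1 d10 hd1] := UC hN cU (Reach_compact U0 fc cU X k cX) gc _ e2.
have [d d0 hd] := RU X cX k _ d10.
exists d => // Y Y0 hY.
have : P X k - e / 2 <= P Y k.
  rewrite {2}/P /Psi; apply: lb_le_inf.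
    have [z Rz] := Reach_nonempty (f:=f) U0 Y k Y0; exists (alpha z); by exists z.
  move=> _ [z' Rz' <-].
  have [z Rz hz] := hd Y hY z' Rz'.
  case: U0 => u Uu.
  have := hd1 z u z' Rz Uu hz; rewrite -ball_normE /ball_ /= => hb.
  have := Psi_le _ _ _ Rz; rewrite /P => h.
  have := ler_norm (alpha z - alpha z'); lra.
lra.
Qed.

Lemma Pk_upper (X : set 'rV[R]_n) : X !=set0 -> forall (k : nat) (e : R), 0 < e ->
  exists2 d, 0 < d & forall Y : set 'rV[R]_n,
  (forall x, X x -> exists2 y, Y y & N (x - y) < d) -> P Y k < P X k + e.
Proof.
move=> X0 k e e0.
have e2 : 0 < e / 2 by rewrite divr_gt0.
have [_ [z Rz <-] hz] : exists2 v, [set alpha z | z in Reach f U X k] v & v < P X k + e / 2.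
  apply: inf_lt; last by rewrite /P ltrDl.
  have [z Rz] := Reach_nonempty (f:=f) U0 X k X0; exists (alpha z); by exists z.
case: Rz hz => x [pi [Xx hpi ->]] hz.
have [d d0 hd] := traj_near x pi k _ e2.
exists d => // Y hY.
have [y Yy hxy] := hY x Xx.
have := hd y; rewrite NB // => /(_ hxy) hn.
have := Psi_le _ _ _ (Reach_mem (k := k) Yy hpi); rewrite /P => h.
have := ler_norm (alpha (traj f y pi k) - alpha (traj f x pi k)); lra.
Qed.

Lemma S_lower (X : set 'rV[R]_n) : compact X -> forall (K : nat) (e : R), 0 < e ->
  exists2 d, 0 < d & forall Y : set 'rV[R]_n, Y !=set0 ->
  (forall y, Y y -> exists2 x, X x & N (y - x) < d) ->
  \sum_(k < K) P X k - e < \sum_(k < K) P Y k.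
Proof.
move=> cX; elim=> [|K IH] e e0.
  by exists 1 => // Y _ _; rewrite !big_ord0 subr_lt0.
have e2 : 0 < e / 2 by rewrite divr_gt0.
have [d1 d10 hd1] := IH _ e2.
have [d2 d20 hd2] := Pk_lower X cX K _ e2.
exists (Num.min d1 d2); first by rewrite lt_min d10 d20.
move=> Y Y0 hY; rewrite !big_ord_recr /=.
have m1 : Num.min d1 d2 <= d1 by rewrite ge_min lexx.
have m2 : Num.min d1 d2 <= d2 by rewrite ge_min lexx orbT.
have h1 := hd1 Y Y0 (fun y Yy => let: ex_intro2 x Xx h := hY y Yy in
   ex_intro2 _ _ x Xx (lt_le_trans h m1)).
have h2 := hd2 Y Y0 (fun y Yy => let: ex_intro2 x Xx h := hY y Yy in
   ex_intro2 _ _ x Xx (lt_le_trans h m2)).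
lra.
Qed.

Lemma S_upper (X : set 'rV[R]_n) : X !=set0 -> forall (K : nat) (e : R), 0 < e ->
  exists2 d, 0 < d & forall Y : set 'rV[R]_n,
  (forall x, X x -> exists2 y, Y y & N (x - y) < d) ->
  \sum_(k < K) P Y k < \sum_(k < K) P X k + e.
Proof.
move=> X0; elim=> [|K IH] e e0.
  by exists 1 => // Y _; rewrite !big_ord0 add0r.
have e2 : 0 < e / 2 by rewrite divr_gt0.
have [d1 d10 hd1] := IH _ e2.
have [d2 d20 hd2] := Pk_upper X X0 K _ e2.
exists (Num.min d1 d2); first by rewrite lt_min d10 d20.
move=> Y hY; rewrite !big_ord_recr /=.
have m1 : Num.min d1 d2 <= d1 by rewrite ge_min lexx.
have m2 : Num.min d1 d2 <= d2 by rewrite ge_min lexx orbT.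
have h1 := hd1 Y (fun x Xx => let: ex_intro2 y Yy h := hY x Xx in
   ex_intro2 _ _ y Yy (lt_le_trans h m1)).
have h2 := hd2 Y (fun x Xx => let: ex_intro2 y Yy h := hY x Xx in
   ex_intro2 _ _ y Yy (lt_le_trans h m2)).
lra.
Qed.

End Main.

Section Series.
Variable R : realType.
Local Open Scope ereal_scope.

Lemma esum_sup (u : nat -> R) : (forall k, (0 <= u k)%R) ->
  \sum_(0 <= k <oo) (u k)%:E = ereal_sup (range (fun K => (\sum_(k < K) u k)%R%:E)).
Proof.
move=> u0.
have hom := ereal_nondecreasing_series (u_ := fun k => (u k)%:E) (P := xpredT) (N := 0%N)
  (fun k _ _ => u0 k).
have := ereal_nondecreasing_cvgn hom.
have h : (fun K => \sum_(0 <= k < K | xpredT k) (u k)%:E) = (fun K => (\sum_(k < K) u k)%R%:E).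
  by apply: funext => K; rewrite sumEFin big_mkord.
rewrite h => hc.
rewrite -h in hc *.
exact: cvg_lim hc.
Qed.

Lemma series_ge (u : nat -> R) K : (forall k, (0 <= u k)%R) ->
  (\sum_(k < K) u k)%R%:E <= \sum_(0 <= k <oo) (u k)%:E.
Proof. by move=> u0; rewrite esum_sup //; apply: ereal_sup_ubound; exists K. Qed.

Lemma series_le (u : nat -> R) (B : R) : (forall k, (0 <= u k)%R) ->
  (forall K, (\sum_(k < K) u k <= B)%R) -> \sum_(0 <= k <oo) (u k)%:E <= B%:E.
Proof.
by move=> u0 h; rewrite esum_sup //; apply: ge_ereal_sup => _ [K _ <-]; rewrite lee_fin.
Qed.

Lemma series_adh (u : nat -> R) (t : R) : (forall k, (0 <= u k)%R) ->
  t%:E < \sum_(0 <= k <oo) (u k)%:E -> exists K, (t < \sum_(k < K) u k)%R.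
Proof.
move=> u0; rewrite esum_sup // => /ereal_sup_gt [_ [K _ <-]].
by rewrite lte_fin => h; exists K.
Qed.

End Series.
Arguments series_ge {R} u K. Arguments series_le {R} u B. Arguments series_adh {R} u t. Arguments esum_sup {R} u.


Section Lam.
Variable R : realType.

Lemma lam_small (lambda : R -> nat -> R) (r p pbar : R) :
  0 < r -> 0 < p -> p <= pbar ->
  (forall s k, 0 <= s <= r -> 0 <= lambda s k) ->
  (forall k s1 s2, 0 <= s1 -> s1 <= s2 -> s2 <= r -> lambda s1 k <= lambda s2 k) ->
  (forall s k1 k2, 0 <= s <= r -> (k1 <= k2)%N -> lambda s k2 <= lambda s k1) ->
  (forall s, 0 <= s <= r -> lambda s 0 <= s) ->
  (\sum_(0 <= k <oo) ((lambda r k) `^ p)%:E < +oo)%E ->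
  forall eta, 0 < eta -> exists s, [/\ 0 < s, s <= r, s <= 1 &
    forall J, \sum_(j < J) (lambda s j) `^ pbar <= eta].
Proof.
move=> r0 p0 ppb lam0 lamS lamK lam0s hsum eta eta0.
have pb0 : 0 < pbar by apply: lt_le_trans ppb.
pose u k := (lambda r k) `^ p.
have u0 : forall k, 0 <= u k by move=> k; exact: powR_ge0.
have L0 : (0 <= (\sum_(0 <= k <oo) (u k)%:E)%E)%E.
  by have := series_ge u 0 u0; rewrite big_ord0.
have Lfin : (\sum_(0 <= k <oo) (u k)%:E)%E \is a fin_num by rewrite ge0_fin_numE.
set L := (\sum_(0 <= k <oo) (u k)%:E)%E in L0 Lfin.
have SL : forall K, \sum_(k < K) u k <= fine L.
  by move=> K; rewrite -lee_fin fineK //; exact: series_ge u K u0.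
have eta2 : 0 < eta / 2 by rewrite divr_gt0.
have [J hJ] : exists J, fine L - eta / 2 < \sum_(k < J) u k.
  apply: (series_adh u) => //; rewrite -/L -[X in (_ < X)%E](fineK Lfin) lte_fin; lra.
pose a := eta / (2 * (J%:R + 1)).
have a0 : 0 < a by rewrite divr_gt0 // mulr_gt0 // ltr_wpDl.
pose s := Num.min (Num.min r 1) (a `^ pbar^-1).
have s0 : 0 < s by rewrite !lt_min r0 ltr01 powR_gt0.
have sr : s <= r by rewrite !ge_min lexx.
have s1 : s <= 1 by rewrite !ge_min lexx orbT.
have sa : s <= a `^ pbar^-1 by rewrite ge_min lexx orbT.
have spb : s `^ pbar <= a.
  apply: (@le_trans _ _ ((a `^ pbar^-1) `^ pbar)).
    apply: ge0_ler_powR => //; [exact: ltW | rewrite nnegrE; exact: ltW | rewrite nnegrE; exact: powR_ge0].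
  by rewrite -powRrM mulVf ?gt_eqF // powRr1 // ltW.
pose v j := (lambda s j) `^ pbar.
have v0 : forall j, 0 <= v j by move=> j; exact: powR_ge0.
have sr' : 0 <= s <= r by rewrite (ltW s0) sr.
have lsj : forall j, 0 <= lambda s j <= s.
  move=> j; rewrite lam0 //=; apply: le_trans (lam0s _ sr').
  exact: lamK.
have hb1 : forall j, v j <= a.
  move=> j; apply: le_trans spb; have /andP[h1 h2] := lsj j.
  apply: ge0_ler_powR => //; [exact: ltW | rewrite nnegrE; exact: ltW].
have hb2 : forall j, v j <= u j.
  move=> j; have /andP[h1 h2] := lsj j.
  apply: (@le_trans _ _ ((lambda s j) `^ p)).
    have [h0|hpos] := eqVneq (lambda s j) 0.
      by rewrite /v h0 powR0 ?gt_eqF // powR_ge0.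
    have hp : 0 < lambda s j by rewrite lt_neqAle eq_sym hpos h1.
    apply: ger_powR => //; rewrite hp /=; exact: le_trans s1.
  apply: ge0_ler_powR => //; [exact: ltW | by rewrite nnegrE; apply: lam0; rewrite lexx (ltW r0) | ].
  exact: (lamS j s r (ltW s0) sr (lexx r)).
exists s; split => // J'.
apply: (@le_trans _ _ (\sum_(0 <= j < J + J') v j)).
  rewrite -(big_mkord xpredT v) [X in _ <= X](@big_cat_nat _ _ _ J') //= ?leq_addl // lerDl.
  by apply: sumr_ge0 => j _.
rewrite (@big_cat_nat _ _ _ J) //= ?leq_addr //.
have e3 : \sum_(0 <= j < J) v j <= a *+ J.
  apply: (@le_trans _ _ (\sum_(0 <= j < J) a)); last by rewrite sumr_const_nat subn0.
  by apply: ler_sum => j _.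
have e4 : \sum_(J <= j < J + J') v j <= \sum_(J <= j < J + J') u j.
  by apply: ler_sum => j _.
have e5 := SL (J + J')%N.
rewrite -(big_mkord xpredT u) (@big_cat_nat _ _ _ J) //= ?leq_addr // -/(\sum_(0 <= i < J) u i) big_mkord in e5.
have e6 : a *+ J <= eta / 2.
  rewrite -mulr_natr /a.
  have hJ1 : 0 < J%:R + 1 :> R by rewrite ltr_wpDl.
  have h : J%:R / (J%:R + 1) <= 1 :> R by rewrite ler_pdivrMr // mul1r lerDl.
  have -> : eta / (2 * (J%:R + 1)) * J%:R = eta / 2 * (J%:R / (J%:R + 1)).
    by field; rewrite gt_eqF.
  by rewrite -[leRHS]mulr1; apply: ler_wpM2l => //; exact: ltW.
lra.
Qed.

End Lam.

Section Dist.
Variables (R : realType) (n : nat) (N : 'rV[R]_n -> R).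
Hypothesis hN : is_norm N.

Lemma dist_ge0 x A : 0 <= dist N x A.
Proof. by apply: inf_ge0' => _ [y _ <-]; exact: Nge0. Qed.

Lemma dist_le x A a : A a -> dist N x A <= N (x - a).
Proof. by move=> Aa; apply: inf_le' => [_ [y _ <-]|]; [exact: Nge0 | exists a]. Qed.

Lemma dist_lt x A t : A !=set0 -> dist N x A < t -> exists2 a, A a & N (x - a) < t.
Proof.
move=> [a Aa] h.
have ne : [set N (x - y) | y in A] !=set0 by exists (N (x - a)); exists a.
by have [_ [b Ab <-] hb] := inf_lt ne h; exists b.
Qed.

Lemma sup_dist_ub X Y x : compact X -> Y !=set0 -> X x ->
  dist N x Y <= sup [set dist N x' Y | x' in X].
Proof.
move=> cX [y0 Yy0] Xx.
have [C C0 hC] := Nle hN.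
have [M0 [_ hM0]] := compact_bounded cX.
have hM : globally X [set x0 | `|x0| <= M0 + 1] by apply: hM0; rewrite ltrDl.
apply: ub_le_sup; last by exists x.
exists (C * (M0 + 1) + N y0) => _ [x' Xx' <-].
apply: le_trans (dist_le x' _ _ Yy0) _.
apply: le_trans (Ntri hN _ _) _; rewrite NN //.
apply: lerD => //; apply: le_trans (hC _) _.
by apply: ler_wpM2l; [exact: ltW | exact: hM].
Qed.

Lemma dH_close X Y d : is_K X -> is_K Y -> dH N X Y < d ->
  (forall y, Y y -> exists2 x, X x & N (y - x) < d) /\
  (forall x, X x -> exists2 y, Y y & N (x - y) < d).
Proof.
move=> [cX X0] [cY Y0]; rewrite /dH => hd; split.
  move=> y Yy; apply: dist_lt => //.
  apply: le_lt_trans (sup_dist_ub _ _ _ cY X0 Yy) _; apply: le_lt_trans hd.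
  by rewrite le_max lexx orbT.
move=> x Xx; apply: dist_lt => //.
apply: le_lt_trans (sup_dist_ub _ _ _ cX Y0 Xx) _; apply: le_lt_trans hd.
by rewrite le_max lexx.
Qed.
End Dist.

Section SumHelp.
Variable R : realType.
Lemma sum_mono (u : nat -> R) K1 K2 : (forall k, 0 <= u k) -> (K1 <= K2)%N ->
  \sum_(k < K1) u k <= \sum_(k < K2) u k.
Proof.
move=> u0 hK.
rewrite -(big_mkord xpredT u) -(big_mkord xpredT u) [X in _ <= X](@big_cat_nat _ _ _ K1) //= lerDl.
by apply: sumr_ge0 => j _.
Qed.

Lemma sum_splitK (u : nat -> R) a b :
  \sum_(k < a + b) u k = \sum_(k < a) u k + \sum_(j < b) u (a + j)%N.
Proof. by rewrite big_split_ord. Qed.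
End SumHelp.
Theorem corollary9 (R : realType) (n m : nat)
  (N : 'rV[R]_n -> R)
  (f : 'rV[R]_n * 'rV[R]_m -> 'rV[R]_n) (U : set 'rV[R]_m)
  (A : set 'rV[R]_n)
  (r M p : R) (lambda : R -> nat -> R)
  (alpha : 'rV[R]_n -> R) (alo ahi pbar : R) :
  is_norm N ->
  continuous f ->
  compact U -> U !=set0 ->
  is_K A ->
  controlled_invariant f U A ->
  local_lp_stabilizable f U N A r M p lambda ->
  continuous alpha ->
  0 < alo -> 0 < ahi -> p <= pbar ->
  (forall x, alo * (dist N x A) `^ pbar <= alpha x /\
             alpha x <= ahi * (dist N x A) `^ pbar) ->
  forall X, is_K X ->
  forall eps, 0 < eps -> exists2 delta, 0 < delta &
    forall Y, is_K Y -> dH N X Y < delta ->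
      `|Wfun f U alpha X - Wfun f U alpha Y| < eps.
Proof.
move=> hN fc cU U0 hA _ hstab ac alo0 ahi0 ppb halpha X hX eps eps0.
have [cX X0] := hX.
case: hstab => r0 [M1 [p0 [lam0 [_ [lamS [_ [lamK [lam0s [hsum hst]]]]]]]]].
have pb0 : 0 < pbar by apply: lt_le_trans ppb.
have M0 : 0 < M by apply: lt_le_trans M1.
have a0 : forall x, 0 <= alpha x.
  move=> x; have [h _] := halpha x; apply: le_trans h.
  by apply: mulr_ge0; [exact: ltW | exact: powR_ge0].
pose P (Y : set 'rV[R]_n) k := Psi alpha (Reach f U Y k).
have P0 : forall Y k, 0 <= P Y k by move=> Y k; exact: (Psi_ge0 _ _ _ f U alpha a0).
have VE : forall Y, Vfun f U alpha Y = (\sum_(0 <= k <oo) (P Y k)%:E)%E by [].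
have V0 : forall Y, (0 <= Vfun f U alpha Y)%E.
  by move=> Y; rewrite VE; have := series_ge (P Y) 0 (P0 Y); rewrite big_ord0.
have W1 : forall Y, Wfun f U alpha Y <= 1.
  move=> Y; rewrite /Wfun; case: (Vfun f U alpha Y) => [v| |] //=.
have [t [ht1 ht2]] : exists t, (t%:E < Vfun f U alpha X)%E /\
    Wfun f U alpha X - eps / 2 < 1 - expR (- t).
  have := V0 X; rewrite /Wfun; case: (Vfun f U alpha X) => [v| |] // hv.
    rewrite lee_fin in hv.
    have e4 : 0 < eps / 4 by rewrite divr_gt0.
    have hl : 0 < ln (1 + eps / 4) by apply: ln_gt0; rewrite ltrDl.
    exists (v - ln (1 + eps / 4)); split.
      by rewrite lte_fin; lra.
    rewrite opprB addrC expRD lnK; last by rewrite posrE; lra.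
    have ev : expR (- v) <= 1 by rewrite expR_le1 oppr_le0.
    have ev0 := expR_gt0 (- v).
    nra.
  exists (- ln (eps / 4)); split; first exact: ltry.
  rewrite opprK lnK ?posrE ?divr_gt0 //; lra.
have [K hK] := series_adh (P X) t (P0 X) ht1.
have [d1 d10 hd1] := S_lower _ _ _ N f U alpha hN fc cU U0 ac a0 X cX K
  (\sum_(k < K) P X k - t) (ltac:(by rewrite subr_gt0)).
have [d2 d20 hd2] : exists2 d2, 0 < d2 & forall Y, is_K Y ->
    (forall x, X x -> exists2 y, Y y & N (x - y) < d2) ->
    Wfun f U alpha Y <= Wfun f U alpha X + eps / 2.
  case eVX: (Vfun f U alpha X) => [v| |]; last first.
  - by have := V0 X; rewrite eVX.
  - exists 1 => // Y _ _.
    have -> : Wfun f U alpha X = 1 by rewrite /Wfun eVX.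
    by have := W1 Y; lra.
  have v0 : 0 <= v by have := V0 X; rewrite eVX lee_fin.
  have WX : Wfun f U alpha X = 1 - expR (- v) by rewrite /Wfun eVX.
  have SX : forall K, \sum_(k < K) P X k <= v.
    by move=> K'; rewrite -lee_fin -eVX VE; exact: series_ge.
  pose eta := eps / 2.
  have eta0 : 0 < eta by rewrite divr_gt0.
  have cpos : 0 < ahi * M `^ pbar by rewrite mulr_gt0 // powR_gt0.
  have [s [s0 sr s1 hs]] := lam_small _ lambda r p pbar r0 p0 ppb lam0 lamS lamK lam0s hsum
    (eta / 2 / (ahi * M `^ pbar)) (ltac:(by rewrite !divr_gt0)).
  pose th := alo * s `^ pbar.
  have th0 : 0 < th by rewrite mulr_gt0 // powR_gt0.
  have [k0 hk0] : exists k0, P X k0 < th.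
    apply: contrapT => hn.
    have hall : forall k, th <= P X k.
      by move=> k; rewrite leNgt; apply/negP => h; apply: hn; exists k.
    pose K0 := (Num.trunc (v / th)).+1.
    have h1 := SX K0.
    have h2 : K0%:R * th <= \sum_(k < K0) P X k.
      have : \sum_(k < K0) th <= \sum_(k < K0) P X k by apply: ler_sum => k _; exact: hall.
      by rewrite sumr_const card_ord mulr_natl.
    have h3 : v / th < K0%:R by exact: truncnS_gt.
    rewrite ltr_pdivrMr // in h3.
    lra.
  have [_ [z Rz <-] hz] : exists2 w, [set alpha z | z in Reach f U X k0] w & w < th.
    apply: inf_lt => //.
    have [z Rz] := Reach_nonempty (f:=f) U0 X k0 X0; exists (alpha z); by exists z.
  case: Rz hz => x [pi [Xx hpi ->]] hz.
  have [de1 de10 hde1] := traj_near _ _ _ N f alpha hN fc ac x pi k0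
    (th - alpha (traj f x pi k0)) (ltac:(by rewrite subr_gt0)).
  have [de2 de20 hde2] := S_upper _ _ _ N f U alpha hN fc U0 ac a0 X X0 k0 (eta / 2)
    (ltac:(by rewrite divr_gt0)).
  exists (Num.min de1 de2); first by rewrite lt_min de10 de20.
  move=> Y hY hcl.
  have m1 : Num.min de1 de2 <= de1 by rewrite ge_min lexx.
  have m2 : Num.min de1 de2 <= de2 by rewrite ge_min lexx orbT.
  have [y Yy hxy] := hcl x Xx.
  have hyx : N (y - x) < de1 by rewrite (NB hN); exact: lt_le_trans hxy m1.
  have hay : alpha (traj f y pi k0) < th.
    have := hde1 y hyx; have := ler_norm (alpha (traj f y pi k0) - alpha (traj f x pi k0)).
    lra.
  set z' := traj f y pi k0 in hay.
  set dz := dist N z' A.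
  have dz0 : 0 <= dz by exact: dist_ge0.
  have dzs : dz < s.
    rewrite ltNge; apply/negP => hsd.
    have [h _] := halpha z'.
    have : s `^ pbar <= dz `^ pbar.
      by apply: ge0_ler_powR => //; [exact: ltW | rewrite nnegrE; exact: ltW].
    rewrite -/dz in h.
    have : alo * s `^ pbar <= alo * dz `^ pbar -> False.
      move=> hh; rewrite /th in hay; lra.
    move=> hF hle; apply: hF; apply: ler_wpM2l => //; exact: ltW.
  have dzr : dz <= r by apply: le_trans sr; exact: ltW.
  have [pi' [hpi' hpi'd]] := hst z' dzr.
  have hPj : forall j, P Y (k0 + j)%N <= ahi * M `^ pbar * lambda s j `^ pbar.
    move=> j.
    have hmem : Reach f U Y (k0 + j) (traj f z' pi' j).
      rewrite /z' -traj_cat; exists y, (@catpi _ _ k0 pi pi'); split => //; exact: adm_cat.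
    apply: le_trans (Psi_le _ _ _ f U alpha a0 _ _ _ hmem) _.
    have [_ h2] := halpha (traj f z' pi' j).
    apply: le_trans h2 _; rewrite -mulrA; apply: ler_wpM2l; first exact: ltW.
    have ls0 : 0 <= lambda s j by apply: lam0; rewrite (ltW s0) sr.
    rewrite -powRM //; last exact: ltW.
    apply: ge0_ler_powR; [exact: ltW | rewrite nnegrE; exact: dist_ge0 | |].
      by rewrite nnegrE; apply: mulr_ge0 => //; exact: ltW.
    apply: le_trans (hpi'd j) _; apply: ler_wpM2l; first exact: ltW.
    by apply: lamS => //; exact: ltW.
  have hVY : (Vfun f U alpha Y <= (v + eta)%:E)%E.
    rewrite VE; apply: (series_le (P Y)) => [|K']; first exact: P0.
    apply: le_trans (sum_mono _ _ _ _ (P0 Y) (leq_addl k0 K')) _.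
    rewrite (sum_splitK _ (P Y)).
    have h1 := hde2 Y (fun x Xx => let: ex_intro2 y Yy h := hcl x Xx in
      ex_intro2 _ _ y Yy (lt_le_trans h m2)).
    have h2 := SX k0.
    have h3 : \sum_(j < K') P Y (k0 + j)%N <= eta / 2.
      have hh1 : \sum_(j < K') P Y (k0 + j)%N <= \sum_(j < K') ahi * M `^ pbar * lambda s j `^ pbar.
        by apply: ler_sum => j _; exact: hPj.
      apply: le_trans hh1 _.
      rewrite -mulr_sumr; have := hs K'.
      rewrite ler_pdivlMr // => hh.
      by rewrite mulrC.
    move: h1 => /=; lra.
  rewrite WX /Wfun; case eVY: (Vfun f U alpha Y) hVY (V0 Y) => [w| |] //.
  rewrite !lee_fin => hw w0.
  have : expR (- v - eta) <= expR (- w) by rewrite ler_expR; lra.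
  rewrite expRD.
  have := expR_ge1Dx (- eta).
  have : expR (- eta) <= 1 by rewrite expR_le1 oppr_le0 ltW.
  have : expR (- v) <= 1 by rewrite expR_le1 oppr_le0.
  have := expR_gt0 (- v); have := expR_gt0 (- eta).
  rewrite /eta; nra.
exists (Num.min d1 d2); first by rewrite lt_min d10 d20.
move=> Y hY hd.
have [hc1 hc2] := dH_close _ _ _ hN X Y _ hX hY hd.
have m1 : Num.min d1 d2 <= d1 by rewrite ge_min lexx.
have m2 : Num.min d1 d2 <= d2 by rewrite ge_min lexx orbT.
have hL : 1 - expR (- t) < Wfun f U alpha Y.
  have hS := hd1 Y hY.2 (fun y Yy => let: ex_intro2 x Xx h := hc1 y Yy in
     ex_intro2 _ _ x Xx (lt_le_trans h m1)).
  have hV : (t%:E < Vfun f U alpha Y)%E.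
    apply: lt_le_trans (series_ge (P Y) K (P0 Y)); rewrite lte_fin /=.
    move: hS => /=; lra.
  rewrite /Wfun; case: (Vfun f U alpha Y) hV => [w| |] // hw.
    rewrite lte_fin in hw.
    have : expR (- w) < expR (- t) by rewrite ltr_expR ltrN2.
    lra.
  by have := expR_gt0 (- t); lra.
have hU := hd2 Y hY (fun x Xx => let: ex_intro2 y Yy h := hc2 x Xx in
   ex_intro2 _ _ y Yy (lt_le_trans h m2)).
rewrite ltr_norml; lra.
Qed.
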